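(* Let $\eta>0$ be a constant and let $B\subseteq\mathbb T^d$ be a closed ball of radius $r>0$ centred at $0$ satisfying $n\,\mathrm{Vol}(B)=\Theta(r^dn)=\omega(1)$. Then with probability $1-(r^dn)^{-\Omega(\eta)}$ there is no vertex $v=(x_v,w_v)$ of the GIRG with $x_v\in\mathbb T^d\setminus B$ and $w_v\ge(\|x_v\|^dn)^{1/(\beta-1-\eta)}$.
   Context: Model (GIRG). Fix constants: $d\ge1$, $\beta\in(2,3)$, $\alpha\in(1,\infty]$, $w_{\min}>0$, a distribution $\mathcal D$ on $\mathbb R_{>0}$. Asymptotics refer to $n\to\infty$, with constants in $\Omega(\eta)$ depending only on model parameters. Ground space: torus $\mathbb T^d=\mathbb R^d/\mathbb Z^d$ with $\|x-y\|=\max_i\min\{|x_i-y_i|,1-|x_i-y_i|\}$, $\|x\|=\|x-0\|$; $\mathrm{Vol}$ = Lebesgue measure. Vertex positions: homogeneous Poisson point process of intensity $n$; independent weights $w_v\sim\mathcal D$ following a weak power law with exponent $\beta$: $\Pr[D\ge w_{\min}]=1$ and for every constant $\gamma>0$ there are constants $0<c_1\le c_2$ with $c_1w^{1-\beta-\gamma}\le\Pr[D\ge w]\le c_2w^{1-\beta+\gamma}$ for all $w\ge w_{\min}$. (Edges are irrelevant for this statement.) *)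

(* Defs.v *)
From HB Require Import structures.
From mathcomp Require Import all_boot all_order all_algebra.
From mathcomp Require Import all_classical all_reals all_analysis.
Set Implicit Arguments. Unset Strict Implicit. Unset Printing Implicit Defensive.
Import Order.TTheory GRing.Theory Num.Theory.
Import numFieldNormedType.Exports.
Local Open Scope classical_set_scope.
Local Open Scope ring_scope.

(** Torus T^d = R^d / Z^d.  Points are represented by tuples of reals
    (any representative); the torus distance to 0 in one coordinate is
    min {|a - k| : k integer} = min(frac a, 1 - frac a). *)
Definition circ_norm {R : realType} (a : R) : R :=
  let f := a - (Num.floor a)%:~R in Num.min f (1 - f).

Definition tnorm {R : realType} (dim : nat) (x : dim.-tuple R) : R :=
  \big[Num.max/0]_(i < dim) circ_norm (tnth x i).

(** Lebesgue measure (volume) on the torus, identified with [0,1]^dim: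
    iterated integral over the coordinates (for measurable sets this is the
    product Lebesgue measure restricted to the unit cube). *)
Fixpoint tvol {R : realType} (dim : nat) : set (dim.-tuple R) -> \bar R :=
  match dim return set (dim.-tuple R) -> \bar R with
  | 0 => fun A => if `[< A [tuple] >] then 1%E else 0%E
  | k.+1 => fun A =>
      (\int[@lebesgue_measure R]_(x in `[0%R, 1%R]%classic)
          tvol [set t : k.-tuple R | A [tuple of x :: t]])%E
  end.

Definition tball {R : realType} (dim : nat) (r : R) : set (dim.-tuple R) :=
  [set x | tnorm x <= r].

Definition mutually_independent {dT} {T : measurableType dT} {R : realType}
  (P : probability T R) {I : eqType} (E : I -> set (set T)) : Prop :=
  forall (J : seq I) (A : I -> set T), uniq J ->
    (forall k, k \in J -> E k (A k)) ->
    P (\bigcap_(k in [set` J]) A k) = (\prod_(k <- J) P (A k))%E.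

Definition weak_power_law {R : realType} (D : probability R R) (beta wmin : R)
  : Prop :=
  D [set w | wmin <= w] = 1%E /\
  forall gamma : R, 0 < gamma ->
    exists c1 c2 : R, 0 < c1 /\ c1 <= c2 /\
      forall w : R, wmin <= w ->
        ((c1 * w `^ (1 - beta - gamma))%:E <= D [set v | (w <= v)%R])%E /\
        (D [set v | (w <= v)%R] <= (c2 * w `^ (1 - beta + gamma))%:E)%E.

(** Vertex set of a GIRG with intensity n, realised on a probability space
    (T, P): a Poisson(n) number N of vertices, vertex i < N having position
    X i, uniform on the torus, and weight W i with law D; all of N, X 0, X 1,
    ..., W 0, W 1, ... mutually independent.  (This is the standard
    construction of the marked homogeneous Poisson point process of
    intensity n on T^d with i.i.d. marks of law D.) *)
Definition girg_vertices {dT} {T : measurableType dT} {R : realType}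
  (P : probability T R) (dim : nat) (D : probability R R) (n : R)
  (N : T -> nat) (X : nat -> {mfun T >-> dim.-tuple R})
  (W : nat -> {mfun T >-> R}) : Prop :=
  (forall k, measurable (N @^-1` [set k])) /\
  (forall k, P (N @^-1` [set k]) = (poisson_pmf n k)%:E) /\
  (forall i (A : set (dim.-tuple R)), measurable A ->
      P (X i @^-1` A) = tvol A) /\
  (forall i (A : set R), measurable A -> P (W i @^-1` A) = D A) /\
  mutually_independent P (fun k : option (nat + nat) =>
    match k with
    | None => [set N @^-1` S | S in [set: set nat]]
    | Some (inl i) => [set X i @^-1` S | S in measurable]
    | Some (inr i) => [set W i @^-1` S | S in measurable]
    end).

Arguments tball {R} dim r.

(* Main.v *)
Require Import Defs.
From HB Require Import structures.
From mathcomp Require Import all_boot all_order all_algebra.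
From mathcomp Require Import all_classical all_reals all_analysis.
From mathcomp Require Import measurable_realfun ring lra.
Import Order.TTheory GRing.Theory Num.Theory.
Import numFieldNormedType.Exports.
Local Open Scope classical_set_scope.
Local Open Scope ring_scope.

Section part1.
Variable R : realType.

Lemma measurable_floorR : measurable_fun [set: R] (fun x : R => ((Num.floor x)%:~R : R)).
Proof.
move=> _ Y mY; rewrite setTI.
rewrite (_ : _ @^-1` Y = \bigcup_(z : int)
   (if pselect (Y (z%:~R : R)) then `[(z%:~R : R), (z+1)%:~R[%classic else set0)).
  eapply countable_bigcupT_measurable; first exact: countableP.
  by move=> z; case: (pselect _) => //=.
apply/seteqP; split => x /=.
  move=> Yx; exists (Num.floor x) => //; case: (pselect _) => // _ /=.
  by rewrite in_itv /= floor_itv.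
case=> z _; case: (pselect _) => //= Yz; rewrite in_itv /= => hz.
by rewrite (floor_def hz).
Qed.

Lemma measurable_circ_norm : measurable_fun [set: R] (@circ_norm R).
Proof.
rewrite /circ_norm.
have mf : measurable_fun [set: R] (fun a : R => a - (Num.floor a)%:~R).
  apply: measurable_funB => //; exact: measurable_floorR.
apply: (@measurable_minr _ _ _ _ (fun a : R => a - (Num.floor a)%:~R)
  (fun a => 1 - (a - (Num.floor a)%:~R))) => //.
by apply: measurable_funB.
Qed.


Lemma measurable_tnorm (dim : nat) : measurable_fun [set: dim.-tuple R] (@tnorm R dim).
Proof.
rewrite /tnorm.
elim: (index_enum _) => [|i s IH].
  under eq_fun do rewrite big_nil. exact: measurable_cst.
under eq_fun do rewrite big_cons.
apply: (@measurable_maxr _ _ _ _ (fun x => circ_norm (tnth x i))) => //.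
apply: measurableT_comp; first exact: measurable_circ_norm.
exact: measurable_tnth.
Qed.

Lemma measurable_tball (dim : nat) (s : R) : measurable (tball dim s).
Proof.
rewrite /tball.
have := @measurable_fun_le _ _ R setT (@tnorm R dim) (cst s) measurableT
  (measurable_tnorm dim) (measurable_cst _).
by rewrite setTI.
Qed.


Definition box (k : nat) (A : set R) : set (k.-tuple R) := [set x | forall i, A (tnth x i)].

Lemma tvol0 k : tvol (set0 : set (k.-tuple R)) = 0%E.
Proof.
elim: k => [|k IH] /=; first by rewrite asboolF.
rewrite (_ : (fun _ => _) = (fun _ => 0%E)); first exact: integral0.
by apply: funext => x; exact: IH.
Qed.

Lemma box_cons k A (x : R) (t : k.-tuple R) :
  box k.+1 A [tuple of x :: t] <-> A x /\ box k A t.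
Proof.
split.
  move=> h; split; first by have := h ord0.
  by move=> i; have := h (lift ord0 i); rewrite tnthS.
case=> Ax Bt i; case: (unliftP ord0 i) => [j ->|->]; first by rewrite tnthS.
by [].
Qed.

Lemma leb01_fin (A : set R) : measurable A ->
  (lebesgue_measure (A `&` `[0%R, 1%R]%classic) \is a fin_num)%E.
Proof.
move=> mA; rewrite ge0_fin_numE ?measure_ge0 //.
apply: (@le_lt_trans _ _ (lebesgue_measure (`[0%R, 1%R]%classic : set R))).
  apply: le_measure => //; rewrite inE //; exact: measurableI.
by rewrite lebesgue_measure_itv /= lte01 oppr0 adde0 ltry.
Qed.

Lemma tvol_box k A : measurable A ->
  tvol (box k A) = ((fine (lebesgue_measure (A `&` `[0%R, 1%R]%classic))) ^+ k)%:E.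
Proof.
move=> mA; set m := fine _.
have hm : lebesgue_measure (A `&` `[0%R, 1%R]%classic) = m%:E by rewrite /m fineK ?leb01_fin.
elim: k => [|k IH] /=.
  rewrite expr0; rewrite asboolT //; by move=> [].
rewrite (_ : (fun _ => _) = (fun x => (\1_A x)%:E * (m ^+ k)%:E)%E); last first.
  apply: funext => x.
  case: (pselect (A x)) => Ax.
    rewrite indicE mem_set // mul1e -IH; congr tvol.
    by apply/seteqP; split => t /=; rewrite box_cons; [case | move=> h; split].
  rewrite indicE memNset // mul0e -(tvol0 k); congr tvol.
  by apply/seteqP; split => t /=; rewrite box_cons; case.
rewrite ge0_integralZr //; first last.
- by rewrite lee_fin exprn_ge0 // fine_ge0 // measure_ge0.
- apply/measurable_EFinP; apply: measurable_funTS; exact: measurable_indic.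
rewrite integral_indic; last 2 first.
- exact: measurable_itv.
- exact: mA.
by rewrite exprS EFinM; congr (_ * _)%E; exact: hm.
Qed.


Lemma itv_meas_le (a b : R) : (lebesgue_measure (`[a, b]%classic : set R) <= (b - a)%:E)%E \/ (b < a).
Proof.
rewrite lebesgue_measure_itv /=; case: ltP => ab.
  by left; rewrite -EFinD.
case: (leP a b) => ab'; last by right.
by left; rewrite lee_fin subr_ge0.
Qed.

Lemma circ_set_le (s : R) : 0 <= s ->
  (lebesgue_measure ([set a | (circ_norm a <= s)%R] `&` `[0%R, 1%R]%classic) <= (2 * s)%:E)%E.
Proof.
move=> s0.
have mS : measurable ([set a : R | circ_norm a <= s]).
  have := @measurable_fun_le _ _ R setT (@circ_norm R) (cst s) measurableT
    measurable_circ_norm (measurable_cst _).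
  by rewrite setTI.
apply: (@le_trans _ _ (lebesgue_measure (`[0%R, s]%classic `|` `[1 - s, 1%R]%classic : set R))).
  apply: le_measure; rewrite ?inE.
  - by apply: measurableI => //; exact: measurable_itv.
  - by apply: measurableU; exact: measurable_itv.
  move=> x [/= hx]; rewrite in_itv /= => /andP[x0 x1].
  case: (ltP x 1) => x1'.
    have fl : Num.floor x = 0 by apply: floor_def; rewrite add0r x0 x1'.
    move: hx; rewrite /circ_norm fl subr0 ge_min => /orP[h|h].
      by left; rewrite /= in_itv /= x0 h.
    by right; rewrite /= in_itv /= x1 andbT lerBlDr addrC -lerBlDr.
  have -> : x = 1 by apply/eqP; rewrite eq_le x1 x1'.
  by right; rewrite /= in_itv /= lexx andbT lerBlDl lerDr.
apply: (le_trans (measureU2 _ _ _)); try exact: measurable_itv.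
rewrite mulr2n mulrDl mul1r EFinD.
case: (itv_meas_le 0 s) => [h1|]; last by rewrite ltNge s0.
case: (itv_meas_le (1 - s) 1) => [h2|h2].
  apply: leeD; first by rewrite subr0 in h1.
  have e : 1 - (1 - s) = s by lra.
  by rewrite e in h2.
exfalso; lra.
Qed.


Lemma bigmax_le_all (I : eqType) (s : R) (l : seq I) (f : I -> R) : 0 <= s ->
  (\big[Num.max/0]_(i <- l) f i <= s) <-> (forall i, i \in l -> f i <= s).
Proof.
move=> s0; elim: l => [|a l IH]; first by rewrite big_nil; split.
rewrite big_cons ge_max; split.
  move=> /andP[ha hl] i; rewrite in_cons => /orP[/eqP ->//|il].
  by move/IH: hl; apply.
move=> h; rewrite h ?mem_head //=; apply/IH => i il; apply: h.
by rewrite in_cons il orbT.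
Qed.

Lemma tball_box dim (s : R) : 0 <= s ->
  tball dim s = box dim [set a | circ_norm a <= s].
Proof.
move=> s0; apply/seteqP; split => x /=.
  by rewrite /tnorm => /(@bigmax_le_all _ _ _ _ s0) h i; apply: h; rewrite mem_index_enum.
by move=> h; rewrite /tnorm; apply/(@bigmax_le_all _ _ _ _ s0) => i _; apply: h.
Qed.

Lemma tvol_tball dim (s : R) : 0 <= s -> (tvol (tball dim s) <= ((2 * s) ^+ dim)%:E)%E.
Proof.
move=> s0; rewrite tball_box // tvol_box; last first.
  have := @measurable_fun_le _ _ R setT (@circ_norm R) (cst s) measurableT
    measurable_circ_norm (measurable_cst _).
  by rewrite setTI.
rewrite lee_fin; apply: lerXn2r; rewrite ?nnegrE.
- by rewrite fine_ge0 // measure_ge0.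
- by rewrite mulr_ge0.
rewrite -lee_fin fineK; first exact: circ_set_le.
apply: leb01_fin.
have := @measurable_fun_le _ _ R setT (@circ_norm R) (cst s) measurableT
  measurable_circ_norm (measurable_cst _).
by rewrite setTI.
Qed.


Lemma tnorm_ge0 dim (x : dim.-tuple R) : 0 <= tnorm x.
Proof.
rewrite /tnorm; elim: (index_enum _) => [|i s IH]; first by rewrite big_nil.
by rewrite big_cons le_max IH orbT.
Qed.

Lemma tvol_level dim (nn u : R) : (0 < dim)%N -> 0 < nn -> 0 <= u ->
  (tvol [set x : dim.-tuple R | (tnorm x ^+ dim * nn <= u)%R] <= (2 ^+ dim * (u / nn))%:E)%E.
Proof.
move=> d0 n0 u0.
have v0 : 0 <= u / nn by rewrite divr_ge0 // ltW.
pose sg := (u / nn) `^ (dim%:R^-1).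
have sg0 : 0 <= sg by exact: powR_ge0.
have hsg : sg ^+ dim = u / nn.
  rewrite -powR_mulrn // -powRrM mulVf ?powRr1 //.
  by rewrite pnatr_eq0 -lt0n.
have -> : [set x : dim.-tuple R | tnorm x ^+ dim * nn <= u] = tball dim sg.
  apply/seteqP; split => x /=.
    have hm := ler_pXn2r d0 (_ : tnorm x \in Num.nneg) (_ : sg \in Num.nneg).
    rewrite /tball /= -hm ?nnegrE ?tnorm_ge0 //.
    by rewrite -ler_pdivlMr // -hsg.
  have hm := ler_pXn2r d0 (_ : tnorm x \in Num.nneg) (_ : sg \in Num.nneg).
  rewrite /tball /= -hm ?nnegrE ?tnorm_ge0 //.
  by rewrite -ler_pdivlMr // -hsg.
apply: (le_trans (tvol_tball dim sg sg0)).
by rewrite exprMn hsg.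
Qed.


Lemma tvol_ge0 dim (A : set (dim.-tuple R)) : (0 <= tvol A)%E.
Proof.
elim: dim A => [|k IH] A /=; first by case: (asboolP _).
by apply: integral_ge0 => x _; exact: IH.
Qed.

End part1.

Section part2.
Variable R : realType.

Lemma nneseries_le_partial (f : nat -> \bar R) (M : \bar R) :
  (forall k, 0 <= f k)%E -> (forall m, \sum_(0 <= k < m) f k <= M)%E ->
  (\sum_(0 <= k <oo) f k <= M)%E.
Proof.
move=> f0 h; apply: lime_le; first exact: is_cvg_ereal_nneg_natsum.
exact: nearW.
Qed.

Lemma geom_partial (rho : R) m : 0 <= rho < 1 ->
  \sum_(0 <= j < m) rho ^+ j <= (1 - rho)^-1.
Proof.
move=> /andP[r0 r1].
have e : (1 - rho) * \sum_(0 <= j < m) rho ^+ j = 1 - rho ^+ m.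
  elim: m => [|m IH]; first by rewrite big_geq // mulr0 expr0 subrr.
  rewrite big_nat_recr //= mulrDr IH exprS; ring.
have p : 0 < 1 - rho by rewrite subr_gt0.
have -> : \sum_(0 <= j < m) rho ^+ j = (1 - rho)^-1 * (1 - rho ^+ m).
  by rewrite -e mulKf // lt0r_neq0.
rewrite -[X in _ <= X]mulr1; apply: ler_wpM2l; first by rewrite invr_ge0 ltW.
by rewrite lerBlDr lerDl exprn_ge0.
Qed.

Lemma pmfS (nn : R) k : 0 < nn ->
  poisson_pmf nn k.+1 * k.+1%:R = nn * poisson_pmf nn k.
Proof.
move=> n0; rewrite /poisson_pmf n0 factS natrM invfM exprS.
have h1 : k`!%:R != 0 :> R by rewrite pnatr_eq0 -lt0n fact_gt0.
have h2 : k.+1%:R != 0 :> R by rewrite pnatr_eq0.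
field.

by rewrite h1 -[k.+1%:R]natr1 addrC in h2 *.
Qed.


Section girg.
Context {dT : measure_display} {T : measurableType dT} (P : probability T R)
  (dim : nat) (D : probability R R) (nn : R) (N : T -> nat)
  (X : nat -> {mfun T >-> dim.-tuple R}) (W : nat -> {mfun T >-> R}).
Hypothesis HG : girg_vertices P D nn N X W.

Lemma mNk k : measurable (N @^-1` [set k]).
Proof. by case: HG. Qed.

Lemma pmf_partial m : \sum_(k < m) poisson_pmf nn k <= 1.
Proof.
case: HG => _ [hp _].
rewrite -lee_fin -sumEFin.
under eq_bigr do rewrite -hp.
rewrite -(@measure_bigsetU _ _ _ P (fun k => N @^-1` [set k])).
- apply: probability_le1; apply: bigsetU_measurable => *; exact: mNk.
- by move=> i; exact: mNk.
- by move=> i j _ _ [om [/= -> <-]].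
Qed.

Lemma kpmf_partial m : 0 < nn -> \sum_(k < m) (k%:R * poisson_pmf nn k) <= nn.
Proof.
move=> n0; case: m => [|m]; first by rewrite big_ord0 ltW.
rewrite big_ord_recl /= mul0r add0r.
under eq_bigr => i _ do rewrite /bump /= add1n mulrC pmfS //.
rewrite -mulr_sumr -[X in _ <= X]mulr1; apply: ler_wpM2l; first exact: ltW.
exact: pmf_partial.
Qed.


Lemma indep3 k i (B : set (dim.-tuple R)) (S : set R) : measurable B -> measurable S ->
  P (N @^-1` [set k] `&` (X i @^-1` B `&` W i @^-1` S)) =
  ((poisson_pmf nn k)%:E * (tvol B * D S))%E.
Proof.
move=> mB mS; case: HG => _ [hp [hX [hW hind]]].
pose A := fun o : option (nat + nat) => match o with
  | None => N @^-1` [set k] | Some (inl _) => X i @^-1` B | Some (inr _) => W i @^-1` S end.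
have := hind [:: None; Some (inl i); Some (inr i)] A isT.
have -> : \bigcap_(o in [set` [:: None; Some (inl i); Some (inr i)]]) A o =
   N @^-1` [set k] `&` (X i @^-1` B `&` W i @^-1` S).
  apply/seteqP; split => om.
    move=> h; split; first by apply: (h None); rewrite /= inE eqxx.
    split; first by apply: (h (Some (inl i))); rewrite /= !inE eqxx orbT.
    by apply: (h (Some (inr i))); rewrite /= !inE eqxx !orbT.
  by move=> [h1 [h2 h3]] [[j|j]|] //=.
rewrite !big_cons big_nil mule1 /= hp hX // hW // => -> //.
move=> [[j|j]|] /=; rewrite !inE.
- move=> /orP[//|/orP[/eqP [->]|//]]; by exists B.
- move=> /orP[//|/orP[//|/eqP [->]]]; by exists S.
- by move=> _; exists [set k].
Qed.

End girg.

Section core.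
Context {dT : measure_display} {T : measurableType dT} (P : probability T R)
  (dim : nat) (D : probability R R) (nn : R) (N : T -> nat)
  (X : nat -> {mfun T >-> dim.-tuple R}) (W : nat -> {mfun T >-> R}).
Hypothesis HG : girg_vertices P D nn N X W.
Variables (r p a c2 wmin : R).
Hypotheses (d0 : (0 < dim)%N) (n0 : 0 < nn) (r0 : 0 < r) (p0 : 0 <= p)
  (dl0 : 0 < a * p - 1) (c20 : 0 <= c2)
  (hD : forall w, wmin <= w -> (D [set v | (w <= v)%R] <= (c2 * w `^ (- a))%:E)%E)
  (hw : wmin <= (r ^+ dim * nn) `^ p).

Let L := r ^+ dim * nn.
Let dl := a * p - 1.
Let rho := 2 `^ (- dl) : R.
Let u j := L * 2 ^+ j.
Let thr j := u j `^ p.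
Let Aj j := [set x : dim.-tuple R | (tnorm x ^+ dim * nn <= u j.+1)%R].
Let Sj j := [set v : R | (thr j <= v)%R].
Let fth (x : dim.-tuple R) := (tnorm x ^+ dim * nn) `^ p.
Let badi i := [set om | ~ tball dim r (X i om) /\ fth (X i om) <= W i om].
Let gj j := 2 ^+ dim * 2 * c2 / nn * (L `^ (- dl) * rho ^+ j).

Lemma L_gt0 : 0 < L.
Proof. by rewrite /L mulr_gt0 // exprn_gt0. Qed.

Lemma u_gt0 j : 0 < u j.
Proof. by rewrite /u mulr_gt0 ?L_gt0 // exprn_gt0. Qed.

Lemma mfth : measurable_fun [set: dim.-tuple R] fth.
Proof.
rewrite /fth; apply: (measurableT_comp (f := (@powR R)^~ p) (g := fun x : dim.-tuple R => tnorm x ^+ dim * nn)); first exact: measurable_powR.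
apply: measurable_funM; last exact: measurable_cst.
apply: measurable_funX; exact: measurable_tnorm.
Qed.

Lemma mAj j : measurable (Aj j).
Proof.
have := @measurable_fun_le _ _ R setT (fun x : dim.-tuple R => tnorm x ^+ dim * nn) (cst (u j.+1)) measurableT _ (measurable_cst _).
rewrite setTI; apply.
apply: measurable_funM; last exact: measurable_cst.
apply: measurable_funX; exact: measurable_tnorm.
Qed.

Lemma mSj j : measurable (Sj j).
Proof.
rewrite (_ : Sj j = `[thr j, +oo[%classic); first exact: measurable_itv.
by apply/seteqP; split => v /=; rewrite in_itv /= andbT.
Qed.

Lemma mbadi i : measurable (badi i).
Proof.
rewrite (_ : badi i = X i @^-1` (~` tball dim r) `&` (setT `&` [set om | fth (X i om) <= W i om])).
  apply: measurableI; first by apply: measurable_funPTI; apply: measurableC; exact: measurable_tball.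
  apply: (@measurable_fun_le _ _ R setT (fth \o X i) (W i)) => //.
  apply: measurableT_comp; first exact: mfth.
  exact: measurable_funP.
by apply/seteqP; split => om /=; [case=> h1 h2 | case=> h1 [_ h2]].
Qed.


Lemma hu j : u j `^ (- dl) = L `^ (- dl) * rho ^+ j.
Proof.
rewrite /u powRM ?ltW ?L_gt0 //; congr (_ * _).
rewrite -powR_mulrn // -powRrM mulrC powRrM powR_mulrn //.
Qed.

Lemma thr_ge j : wmin <= thr j.
Proof.
apply: (le_trans hw); rewrite /thr /u -/L.
have L0 := L_gt0.
apply: ge0_ler_powR => //; rewrite ?nnegrE.
- exact: ltW.
- by rewrite mulr_ge0 ?exprn_ge0 ?ltW.
- by rewrite ler_peMr ?(ltW L0) // exprn_ege1 // ler1n.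
Qed.

Lemma term_bound j : (tvol (Aj j) * D (Sj j) <= (gj j)%:E)%E.
Proof.
have hA := @tvol_level R dim nn (u j.+1) d0 n0 (ltW (u_gt0 j.+1)).
have hS : (D (Sj j) <= (c2 * thr j `^ (- a))%:E)%E by apply: hD; exact: thr_ge.
apply: (le_trans (lee_pmul _ _ hA hS)).
- exact: tvol_ge0.
- exact: measure_ge0.
rewrite -EFinM lee_fin le_eqVlt; apply/orP; left; apply/eqP.
rewrite /thr -powRrM (_ : p * - a = - 1 + - dl); last by rewrite /dl; ring.
rewrite powRD; last by apply/implyP => _; exact: lt0r_neq0 (u_gt0 j).
rewrite powR_inv1 ?ltW ?u_gt0 // hu /gj.
have uj0 := u_gt0 j.
rewrite (_ : u j.+1 = u j * 2); last by rewrite /u exprS; ring.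
field.
by rewrite gt_eqF // gt_eqF.
Qed.


Lemma sub_shell i om : badi i om -> exists j, Aj j (X i om) /\ Sj j (W i om).
Proof.
move=> [hb hW].
set t := tnorm (X i om) in hb hW *.
have rt : r < t by rewrite ltNge; apply/negP.
set y := t ^+ dim * nn.
have Ly : L < y.
  rewrite /y /L ltr_pM2r // ltrXn2r ?ltW //.
  by rewrite -lt0n.
have L0 := L_gt0.
have ex : exists m, y <= L * 2 ^+ m.
  exists (Num.trunc (y / L)).+1.
  rewrite -ler_pdivrMl //.
  apply: ltW; apply: (lt_le_trans (truncnS_gt _)).
  rewrite -natrX ler_nat mulrC; apply: (leq_ltn_trans (leqnSn _)); exact: ltn_expl.
case: (ex_minnP ex) => m hm hmin.
case: m hm hmin => [|j] hm hmin.
  by move: hm; rewrite expr0 mulr1 leNgt Ly.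
exists j; split; first exact: hm.
have hj : L * 2 ^+ j < y.
  rewrite ltNge; apply/negP => hc.
  by have := hmin _ hc; rewrite ltnn.
apply: (le_trans _ hW); rewrite /thr /fth.
apply: ge0_ler_powR => //; rewrite ?nnegrE.
- exact: ltW (u_gt0 j).
- by rewrite mulr_ge0 ?exprn_ge0 ?tnorm_ge0 ?ltW.
- exact: ltW.
Qed.


Lemma mNk' k : measurable (N @^-1` [set k]).
Proof. by case: HG. Qed.

Lemma rho_ge0 : 0 <= rho.
Proof. exact: powR_ge0. Qed.

Lemma rho_lt1 : rho < 1.
Proof.
rewrite /rho powRN invf_lt1; last by apply: powR_gt0.
rewrite /powR (negbTE (lt0r_neq0 (ltr0n _ 2))) expR_gt1.
by rewrite mulr_gt0 // ln_gt0 // ltr1n.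
Qed.

Let Q := 2 ^+ dim * 2 * c2 / nn * L `^ (- dl) * (1 - rho)^-1.

Lemma Q_ge0 : 0 <= Q.
Proof.
have h1 : 0 <= (1 - rho)^-1 by rewrite invr_ge0 subr_ge0 ltW // rho_lt1.
have h2 : 0 <= nn^-1 by rewrite invr_ge0 ltW.
by rewrite /Q !mulr_ge0 // ?exprn_ge0 ?powR_ge0.
Qed.

Lemma mNset (S : set nat) : measurable (N @^-1` S).
Proof.
rewrite (_ : N @^-1` S = \bigcup_(k in S) N @^-1` [set k]).
  by apply: bigcup_measurable => k _; exact: mNk'.
apply/seteqP; split => om /=; [move=> h; by exists (N om) | case=> k Sk hk].
by rewrite hk.

Qed.

Lemma bound_bi k i :
  (P (N @^-1` [set k] `&` badi i) <= (poisson_pmf nn k * Q)%:E)%E.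
Proof.
pose F j := N @^-1` [set k] `&` (X i @^-1` Aj j `&` W i @^-1` Sj j).
have mF j : measurable (F j).
  apply: measurableI; first exact: mNk'.
  apply: measurableI; apply: measurable_funPTI; [exact: mAj | exact: mSj].
apply: (le_trans (measure_sigma_subadditive _ (F := F) _ _ _)).
- exact: mF.
- apply: measurableI; [exact: mNk' | exact: mbadi].
- move=> om [hk hb]; case: (sub_shell _ _ hb) => j [h1 h2].
  by exists j => //; split.
apply: nneseries_le_partial; first by move=> j; exact: measure_ge0.
move=> m.
apply: (@le_trans _ _ (\sum_(0 <= j < m) (poisson_pmf nn k * gj j)%:E)%E).
  apply: lee_sum => j _; rewrite /F.
  rewrite [Z in (Z <= _)%E](_ : _ = ((poisson_pmf nn k)%:E * (tvol (Aj j) * D (Sj j)))%E); last first.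
    by apply: (@indep3 _ _ P dim D nn N X W HG); [exact: mAj | exact: mSj].
  rewrite EFinM; apply: lee_pmul => //.
  - by rewrite lee_fin poisson_pmf_ge0.
  - by apply: mule_ge0; [exact: tvol_ge0 | exact: measure_ge0].
  - exact: term_bound.
rewrite sumEFin lee_fin -mulr_sumr; apply: ler_wpM2l; first exact: poisson_pmf_ge0.
rewrite /gj.
under eq_bigr do rewrite mulrA.
rewrite -mulr_sumr /Q -!mulrA; apply: ler_wpM2l; first by rewrite exprn_ge0.
apply: ler_wpM2l => //.
apply: ler_wpM2l => //.
apply: ler_wpM2l; first by rewrite invr_ge0 ltW.
apply: ler_wpM2l; first exact: powR_ge0.
apply: geom_partial; by rewrite rho_ge0 rho_lt1.
Qed.


Let bad := [set om | exists i, (i < N om)%N /\ ~ tball dim r (X i om) /\ fth (X i om) <= W i om].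

Lemma mbad : measurable bad.
Proof.
rewrite (_ : bad = \bigcup_i (N @^-1` [set k | (i < k)%N] `&` badi i)).
  by apply: bigcupT_measurable => i; apply: measurableI; [exact: mNset | exact: mbadi].
apply/seteqP; split => om /=.
  by case=> i [h1 h2]; exists i.
by case=> i _ [h1 h2]; exists i.
Qed.

Lemma bound_k k :
  (P (bad `&` N @^-1` [set k]) <= (k%:R * poisson_pmf nn k * Q)%:E)%E.
Proof.
apply: (le_trans (@content_subadditive _ _ _ P _ (fun i => N @^-1` [set k] `&` badi i) k _ _ _)).
- by move=> i _; apply: measurableI; [exact: mNk' | exact: mbadi].
- by apply: measurableI; [exact: mbad | exact: mNk'].
- rewrite -(bigcup_mkord k (fun i => N @^-1` [set k] `&` badi i)) => om [[i [hi hb]] hk].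
  exists i; first by rewrite /= -hk.
  by split.
apply: (@le_trans _ _ (\sum_(i < k) (poisson_pmf nn k * Q)%:E)%E).
  by apply: lee_sum => i _; exact: bound_bi.
by rewrite sumEFin sumr_const card_ord lee_fin -[Z in _ <= Z]mulrA mulr_natl.
Qed.

Lemma core_bound : (P bad <= (nn * Q)%:E)%E.
Proof.
apply: (le_trans (measure_sigma_subadditive _ (F := fun k => bad `&` N @^-1` [set k]) _ _ _)).
- by move=> k; apply: measurableI; [exact: mbad | exact: mNk'].
- exact: mbad.
- by move=> om h; exists (N om).
apply: nneseries_le_partial; first by move=> k; exact: measure_ge0.
move=> m.
apply: (@le_trans _ _ (\sum_(0 <= k < m) (k%:R * poisson_pmf nn k * Q)%:E)%E).
  by apply: lee_sum => k _; exact: bound_k.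
rewrite sumEFin lee_fin -mulr_suml big_mkord; apply: ler_wpM2r; first exact: Q_ge0.
exact: (@kpmf_partial _ _ P dim D nn N X W HG).
Qed.

End core.
End part2.

Theorem lemma5p4 (R : realType) (dim : nat) (beta : R) (alpha : \bar R)
  (wmin : R) (D : probability R R) :
  (1 <= dim)%N -> 2 < beta < 3 -> (1%:E < alpha)%E -> 0 < wmin ->
  weak_power_law D beta wmin ->
  exists c : R, 0 < c /\
  forall eta : R, 0 < eta -> eta < beta - 1 ->
  forall r : nat -> R, (forall n, 0 < r n) ->
    (exists C1 C2 : R, 0 < C1 /\ 0 < C2 /\
       \forall n \near \oo,
         C1 * (r n ^+ dim * n%:R) <= fine (n%:R%:E * tvol (tball dim (r n)))%E
         /\ fine (n%:R%:E * tvol (tball dim (r n)))%E <= C2 * (r n ^+ dim * n%:R)) ->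
    (fun n : nat => r n ^+ dim * n%:R) @ \oo --> +oo ->
  \forall n \near \oo,
    forall dT (T : measurableType dT) (P : probability T R)
      (N : T -> nat) (X : nat -> {mfun T >-> dim.-tuple R})
      (W : nat -> {mfun T >-> R}),
    girg_vertices P D n%:R N X W ->
    (P [set om | exists i, (i < N om)%N /\
         ~ tball dim (r n) (X i om) /\
         ((tnorm (X i om) ^+ dim * n%:R) `^ (1 / (beta - 1 - eta)) <= W i om)%R]
     <= ((r n ^+ dim * n%:R) `^ (- (c * eta)))%:E)%E.
Proof.
move=> d0 /andP[b2 b3] _ w0 [_ wpl].
exists (8^-1); split; first by rewrite invr_gt0.
move=> eta e0 eb r Hr _ Hinf.
have [c1 [c2 [c10 [c12 hc]]]] := wpl (eta / 2) (divr_gt0 e0 (ltr0n _ 2)).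
have c20 : 0 <= c2 by apply: ltW; apply: (lt_le_trans c10 c12).
set b := beta - 1 - eta.
have b0 : 0 < b by rewrite /b; lra.
have b2' : b < 2 by rewrite /b; lra.
set p := 1 / b.
have p0 : 0 < p by rewrite /p divr_gt0.
set a := beta - 1 - eta / 2.
set dl := a * p - 1.
have hdl : dl = (eta / 2) / b.
  rewrite /dl /a /p /b; field; by rewrite -/b gt_eqF.
have dl_gt : eta / 4 < dl.
  rewrite hdl (_ : eta / 4 = (eta / 2) / 2); last by field.
  rewrite ltr_pM2l ?divr_gt0 //; rewrite ltf_pV2 ?posrE //.
have dl0 : 0 < dl by apply: lt_trans dl_gt; rewrite divr_gt0.
set e1 := 8^-1 * eta.
set e2 := dl - e1.
have e20 : 0 < e2 by rewrite /e2 /e1; lra.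
set rho := 2 `^ (- dl) : R.
have rho1 : rho < 1.
  rewrite /rho powRN invf_lt1; last by apply: powR_gt0.
  rewrite /powR (negbTE (lt0r_neq0 (ltr0n _ 2))) expR_gt1.
  by rewrite mulr_gt0 // ln_gt0 // ltr1n.
set K := 2 ^+ dim * 2 * c2 / (1 - rho).
have K0 : 0 <= K.
  have h1 : 0 <= (1 - rho)^-1 by rewrite invr_ge0 subr_ge0 ltW.
  by rewrite /K !mulr_ge0 // exprn_ge0.
have hD : forall w, wmin <= w -> (D [set v | (w <= v)%R] <= (c2 * w `^ (- a))%:E)%E.
  move=> w hw; have [_ h] := hc w hw.
  have e : 1 - beta + eta / 2 = - a by rewrite /a; ring.
  by rewrite e in h.
pose M := Num.max (wmin `^ (p^-1)) (K `^ (e2^-1)).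
have H1 := (cvgryPge _).1 Hinf M.
have H2 : \forall n \near \oo, (0 < n)%N by exists 1%N.
near=> n => dT T P N X W HG.
have hM : M <= r n ^+ dim * n%:R by near: n; exact: H1.
have hn : (0 < n)%N by near: n; exact: H2.
set L := r n ^+ dim * n%:R in hM *.
have n0 : 0 < n%:R :> R by rewrite ltr0n.
have L0 : 0 < L by rewrite /L mulr_gt0 // exprn_gt0.
have hw : wmin <= L `^ p.
  apply: (@le_trans _ _ ((wmin `^ (p^-1)) `^ p)).
    rewrite -powRrM mulVf; last exact: lt0r_neq0.
    rewrite powRr1 ?lexx //; exact: ltW.
  apply: ge0_ler_powR; rewrite ?nnegrE ?powR_ge0 //; try exact: ltW.
  apply: le_trans hM; by rewrite le_max lexx.
have hK : K <= L `^ e2.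
  apply: (@le_trans _ _ ((K `^ (e2^-1)) `^ e2)).
    rewrite -powRrM mulVf; last exact: lt0r_neq0.
    by rewrite powRr1 ?lexx.
  apply: ge0_ler_powR; rewrite ?nnegrE ?powR_ge0 //; try exact: ltW.
  apply: le_trans hM; by rewrite le_max lexx orbT.
apply: (le_trans (@core_bound R _ _ P dim D n%:R N X W HG (r n) p a c2 wmin _ n0 (Hr n) (ltW p0) dl0 c20 hD hw)).
  by [].
rewrite lee_fin -/L -/dl -/rho.
rewrite (_ : n%:R * (2 ^+ dim * 2 * c2 / n%:R * L `^ (- dl) / (1 - rho)) = K * L `^ (- dl)); last first.
  rewrite /K; field.
  have h1 : 1 - rho != 0 by rewrite subr_eq0 eq_sym lt_eqF.
  by rewrite h1 lt0r_neq0.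
rewrite (_ : - e1 = e2 + - dl); last by rewrite /e2; ring.
rewrite powRD; last by apply/implyP => _; exact: lt0r_neq0.
apply: ler_wpM2r => //; exact: powR_ge0.
Unshelve. all: by end_near.
Qed.
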